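(* Let $A=(A,\wedge,\vee,\cdot,\to,1)$ be a $\mathsf{DLCMI}$, $a,b\in A$, and $(c,d),(u,w)\in R(a,b)$. Then there are natural numbers $n,k$ such that: 1) $t_n^{2k}(a,b)\cdot(c\to u)\le d\to w$; 2) $t_n^{2k}(a,b)\cdot((c\to u)\wedge a\wedge b)\le (d\to w)\wedge a\wedge b$; 3) $t_n^{2k}(a,b)\cdot((d\to w)\wedge a\wedge b)\le (c\to u)\wedge a\wedge b$; 4) $t_n^{2k}(a,b)\cdot((c\to u)\vee a\vee b)\le (d\to w)\vee a\vee b$; 5) $t_n^{2k}(a,b)\cdot((d\to w)\vee a\vee b)\le (c\to u)\vee a\vee b$; 6) $t_{n+1}^{2k}(a,b)\le (c\to u)\leftrightarrow(d\to w)$.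
   Context: An algebra $(A,\wedge,\vee,\cdot,\to,1)$ of type $(2,2,2,2,0)$ is a $\mathsf{DLCMI}$ if for all $a,b,c\in A$: (1) $(A,\wedge,\vee)$ is a distributive lattice; (2) $1$ is its largest element; (3) $(A,\cdot,1)$ is a commutative monoid; (4) $(a\to b)\wedge(a\to c)=a\to(b\wedge c)$; (5) $(a\to c)\wedge(b\to c)=(a\vee b)\to c$; (6) $a\to a=1$; (7) $(a\vee b)\cdot c=(a\cdot c)\vee(b\cdot c)$; (8) $(a\to b)\cdot(b\to c)\le a\to c$; (9) $a\to b\le (a\cdot c)\to(b\cdot c)$. Notation: $x^0=1$, $x^{m}=x\cdot x^{m-1}$; $\square(x)=1\to x$, $\square^0(x)=x$, $\square^{m}$ the $m$-fold iterate; $x\leftrightarrow y=(x\to y)\wedge(y\to x)$; $t_n(a,b)=\square^0(a\leftrightarrow b)\wedge\square(a\leftrightarrow b)\wedge\cdots\wedge\square^n(a\leftrightarrow b)$; $t_n^k(a,b)=(t_n(a,b))^k$. $R(a,b)$ is the binary relation on $A$ with $(c,d)\in R(a,b)$ iff there exist natural numbers $n,k$ such that (C1) $t_n^k(a,b)\cdot(c\wedge a\wedge b)\le d\wedge a\wedge b$ and $t_n^k(a,b)\cdot(d\wedge a\wedge b)\le c\wedge a\wedge b$; (C2) $t_n^k(a,b)\cdot(c\vee a\vee b)\le d\vee a\vee b$ and $t_n^k(a,b)\cdot(d\vee a\vee b)\le c\vee a\vee b$; (C3) $t_n^k(a,b)\le c\leftrightarrow d$. *)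

(* Defs.v *)
From mathcomp Require Import all_boot all_order.
Set Implicit Arguments. Unset Strict Implicit. Unset Printing Implicit Defensive.
Import Order.TTheory.
Local Open Scope order_scope.

(* A DLCMI: the lattice reduct (A, meet, join) is a mathcomp distributive
   lattice; the order <= is the lattice order. The remaining operations are
   explicit. *)
Record DLCMI_axioms (disp : Order.disp_t) (A : distrLatticeType disp)
    (mul imp : A -> A -> A) (one : A) : Prop := {
  dlcmi_top   : forall a : A, a <= one;
  dlcmi_mulA  : forall a b c : A, mul a (mul b c) = mul (mul a b) c;
  dlcmi_mulC  : forall a b : A, mul a b = mul b a;
  dlcmi_mul1  : forall a : A, mul one a = a;
  dlcmi_impM  : forall a b c : A, imp a b `&` imp a c = imp a (b `&` c);
  dlcmi_impJ  : forall a b c : A, imp a c `&` imp b c = imp (a `|` b) c;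
  dlcmi_impxx : forall a : A, imp a a = one;
  dlcmi_mulJ  : forall a b c : A, mul (a `|` b) c = mul a c `|` mul b c;
  dlcmi_trans : forall a b c : A, mul (imp a b) (imp b c) <= imp a c;
  dlcmi_mono  : forall a b c : A, imp a b <= imp (mul a c) (mul b c)
}.

Section Ops.
Context {disp : Order.disp_t} {A : distrLatticeType disp}
        (mul imp : A -> A -> A) (one : A).

Definition dpow (x : A) (m : nat) : A := iter m (mul x) one.
Definition dbox (x : A) : A := imp one x.
Definition dboxn (m : nat) (x : A) : A := iter m dbox x.
Definition dbiimp (x y : A) : A := imp x y `&` imp y x.
Fixpoint dt (n : nat) (a b : A) : A :=
  match n with
  | 0 => dboxn 0 (dbiimp a b)
  | n'.+1 => dt n' a b `&` dboxn n'.+1 (dbiimp a b)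
  end.
Definition dtk (n k : nat) (a b : A) : A := dpow (dt n a b) k.

Definition inR (a b c e : A) : Prop :=
  exists n k : nat,
    [/\ mul (dtk n k a b) (c `&` a `&` b) <= e `&` a `&` b,
        mul (dtk n k a b) (e `&` a `&` b) <= c `&` a `&` b,
        mul (dtk n k a b) (c `|` a `|` b) <= e `|` a `|` b,
        mul (dtk n k a b) (e `|` a `|` b) <= c `|` a `|` b
      & dtk n k a b <= dbiimp c e].
End Ops.

(* Main.v *)
Require Import Defs.
From mathcomp Require Import all_boot all_order.
Import Order.TTheory.
Local Open Scope order_scope.

Lemma L_all (disp : Order.disp_t) (A : distrLatticeType disp)
    (mul imp : A -> A -> A) (one : A) :
  DLCMI_axioms mul imp one ->
  [/\ (forall x y z : A, x <= y -> mul x z <= mul y z),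
      (forall x y z : A, x <= y -> mul z x <= mul z y),
      (forall x y : A, mul x y <= y),
      (forall x y z : A, y <= z -> imp x y <= imp x z)
    & (forall x y : A, mul (dbox imp one x) (dbox imp one y)
                        <= dbox imp one (mul x y))].
Proof.
case=> top mA mC m1 iM iJ ixx mJ tr mo.
have mml : forall x y z : A, x <= y -> mul x z <= mul y z.
  by move=> x y z /join_r E; rewrite -E mJ; exact: leUl.
have mmr : forall x y z : A, x <= y -> mul z x <= mul z y.
  by move=> x y z le; rewrite ![mul z _]mC; apply: mml.
have mle : forall x y : A, mul x y <= y.
  by move=> x y; rewrite -{2}(m1 y); apply: mml.
have imr : forall x y z : A, y <= z -> imp x y <= imp x z.
  by move=> x y z /meet_l E; rewrite -E -iM leIr.
split=> // x y; rewrite /dbox.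
apply: le_trans (tr one y (mul x y)).
rewrite mC; apply: mmr.
by have := mo one x y; rewrite m1.
Qed.

Lemma dpow_add (disp : Order.disp_t) (A : distrLatticeType disp)
    (mul imp : A -> A -> A) (one : A) :
  DLCMI_axioms mul imp one -> forall x i j,
  dpow mul one x (i + j) = mul (dpow mul one x i) (dpow mul one x j).
Proof.
case=> top mA mC m1 iM iJ ixx mJ tr mo x i j.
elim: i => [|i IH]; first by rewrite add0n /= m1.
by rewrite addSn /dpow !iterS -/(dpow mul one x _) IH mA.
Qed.

Theorem lemma3p8 (disp : Order.disp_t) (A : distrLatticeType disp)
    (mul imp : A -> A -> A) (one : A) :
  DLCMI_axioms mul imp one ->
  forall a b c d u w : A,
    inR mul imp one a b c d -> inR mul imp one a b u w ->
    exists n k : nat,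
      mul (dtk mul imp one n (2 * k)%N a b) (imp c u) <= imp d w /\
          mul (dtk mul imp one n (2 * k)%N a b) (imp c u `&` a `&` b)
            <= imp d w `&` a `&` b /\
          mul (dtk mul imp one n (2 * k)%N a b) (imp d w `&` a `&` b)
            <= imp c u `&` a `&` b /\
          mul (dtk mul imp one n (2 * k)%N a b) (imp c u `|` a `|` b)
            <= imp d w `|` a `|` b /\
          mul (dtk mul imp one n (2 * k)%N a b) (imp d w `|` a `|` b)
            <= imp c u `|` a `|` b /\
          dtk mul imp one n.+1 (2 * k)%N a b <= dbiimp imp (imp c u) (imp d w).
Proof.
move=> H; have [mml mmr mle imr bM] := @L_all _ _ _ _ _ H.
have Dadd := @dpow_add _ _ _ _ _ H.
case: H => top mA mC m1 iM iJ ixx mJ tr mo.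
move=> a b c d u w [n1 [k1 [_ _ _ _ H1]]] [n2 [k2 [_ _ _ _ H2]]].
pose e := dbiimp imp a b.
have dtS : forall n, dt imp one n.+1 a b <= dt imp one n a b by move=> n; exact: leIl.
have dtA : forall m n, (m <= n)%N -> dt imp one n a b <= dt imp one m a b.
  move=> m n /subnK <-; elim: (n - m)%N => [|j IH] //.
  by rewrite addSn; apply: le_trans (dtS _) IH.
have dt1 : forall n, dt imp one n a b <= one by [].
have pA : forall x m k, x <= one -> (k <= m)%N -> dpow mul one x m <= dpow mul one x k.
  move=> x m k x1 /subnK <-; elim: (m - k)%N => [|j IH] //.
  rewrite addSn /dpow iterS -/(dpow mul one x _); apply: le_trans (mle _ _) IH.
have pM : forall x y k, x <= y -> dpow mul one x k <= dpow mul one y k.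
  move=> x y k le; elim: k => [|k IH] //; rewrite /dpow !iterS -!/(dpow mul one _ _).
  by apply: le_trans (mml _ _ _ le) (mmr _ _ _ IH).
have pB : forall x k, dpow mul one (dbox imp one x) k <= dbox imp one (dpow mul one x k).
  move=> x; elim=> [|k IH]; first by rewrite /= /dbox ixx.
  rewrite /dpow !iterS -!/(dpow mul one _ _).
  exact: le_trans (mmr _ _ _ IH) (bM _ _).
have tB : forall n, dt imp one n.+1 a b <= dbox imp one (dt imp one n a b).
  elim=> [|n IH]; first exact: leIr.
  rewrite [dt _ _ n.+2 a b]/= [dt _ _ n.+1 a b]/= /dbox -iM -/(dbox imp one _).
  by apply: leI2 => //; rewrite /dboxn iterS.
pose n := maxn n1 n2; pose k := maxn k1 k2.
pose s := dpow mul one (dt imp one n a b) k.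
have sle : forall m j, (m <= n)%N -> (j <= k)%N -> s <= dtk mul imp one m j a b.
  move=> m j hm hj; apply: le_trans (pA _ _ _ (dt1 _) hj) _.
  exact: pM (dtA _ _ hm).
have s1 := le_trans (sle _ _ (leq_maxl n1 n2) (leq_maxl k1 k2)) H1.
have s2 := le_trans (sle _ _ (leq_maxr n1 n2) (leq_maxr k1 k2)) H2.
move: s1 s2; rewrite /dbiimp !lexI => /andP[scd sdc] /andP[suw swu].
have key : forall c d u w, s <= imp d c -> s <= imp u w ->
    mul (mul s s) (imp c u) <= imp d w.
  move=> c' d' u' w' h1 h2.
  rewrite -mA [mul s (imp _ _)]mC mA.
  apply: le_trans (mml _ _ _ (mml _ _ _ h1)) _.
  apply: le_trans (mmr _ _ _ h2) _.
  apply: le_trans (mml _ _ _ (tr _ _ _)) _; exact: tr.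
have T : dtk mul imp one n (2 * k) a b = mul s s by rewrite /dtk mul2n -addnn Dadd.
have K1 := key _ _ _ _ sdc suw.
have K2 := key _ _ _ _ scd swu.
have meetL : forall X Y, mul (mul s s) X <= Y ->
    mul (mul s s) (X `&` a `&` b) <= Y `&` a `&` b.
  move=> X Y h; rewrite !lexI; apply/andP; split; first (apply/andP; split).
  - apply: le_trans h; apply: mmr; exact: le_trans (leIl _ _) (leIl _ _).
  - apply: le_trans (mle _ _) _; exact: le_trans (leIl _ _) (leIr _ _).
  - apply: le_trans (mle _ _) _; exact: leIr.
have joinL : forall X Y, mul (mul s s) X <= Y ->
    mul (mul s s) (X `|` a `|` b) <= Y `|` a `|` b.
  move=> X Y h; rewrite ![mul (mul s s) _]mC !mJ -![mul _ (mul s s)]mC.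
  by apply: leU2; [apply: leU2|] => //; apply: mle.
exists n, k; rewrite T; do 5 (split; first by auto).
apply: le_trans (pM _ _ _ (tB n)) _; apply: le_trans (pB _ _) _.
rewrite -/(dtk mul imp one n (2 * k) a b) T /dbiimp lexI /dbox.
by apply/andP; split; [have := mo one (mul s s) (imp c u) | have := mo one (mul s s) (imp d w)];
  rewrite m1 => h; apply: le_trans h _; apply: imr.
Qed.
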